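(* Let $n\geq 2$. On $\mathfrak{sl}_{n+1}(\mathbb C)$ with commutator bracket, let $\langle X,Y\rangle=\operatorname{tr}(XY^* )$. Embed $\mathfrak{sl}_n(\mathbb C)$ as the upper-left $n\times n$ block, let $I=\sqrt{\tfrac{1}{n(n+1)}}\begin{pmatrix}\mathrm{id}_n&0\\0&-n\end{pmatrix}$ and $\mathfrak s=\operatorname{span}_{\mathbb C}\{e_{i(n+1)},e_{(n+1)i}:1\le i\le n\}$ ($e_{ij}$ the elementary matrices), so that $\mathfrak{sl}_{n+1}(\mathbb C)=\mathfrak{sl}_n(\mathbb C)\oplus\mathbb CI\oplus\mathfrak s$ orthogonally. For $x,y,z>0$ let $\sigma_{x,y,z}=x^{-1}\mathrm{id}_{\mathfrak{sl}_n(\mathbb C)}+y^{-1}\mathrm{id}_{\mathbb CI}+z^{-1}\mathrm{id}_{\mathfrak s}$ and let $P_{x,y,z}$ be the torsion-twisted Chern--Ricci operator of the Hermitian inner product $\langle\sigma_{x,y,z}\cdot,\cdot\rangle$ on $(\mathfrak{sl}_{n+1}(\mathbb C),[\cdot,\cdot])$. Then for all $x,y,z>0$, \[P_{x,y,z}=\Big(nx+\frac{z^2}{x}\Big)\mathrm{id}_{\mathfrak{sl}_n(\mathbb C)}+(n+1)\frac{z^2}{y}\mathrm{id}_{\mathbb CI}+\frac{n+1}{n}\big((n-1)x+y\big)\mathrm{id}_{\mathfrak s}.\]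
   Context: For a complex Lie algebra $(\mathfrak g,\mu)$ with Hermitian inner product $g$, the torsion-twisted Chern--Ricci operator $P^g_\mu$ is the $g$-Hermitian endomorphism defined by $g(P^g_\mu X,X)=\sum_{i<j}|g(\mu(e_i,e_j),X)|^2$ for any $g$-unitary complex basis $\{e_i\}$; equivalently $P^g_\mu=\tfrac12\sum_i\operatorname{ad}_{e_i}\circ\operatorname{ad}_{e_i}^*$ with adjoint taken w.r.t. $g$. It satisfies $g(P\cdot,\cdot)=\Theta(g)$, the torsion-twisted Chern--Ricci form of the corresponding left-invariant metric. *)

(* Defs.v *)
From mathcomp Require Import all_boot all_order all_algebra.
Set Implicit Arguments. Unset Strict Implicit. Unset Printing Implicit Defensive.
Import Order.TTheory GRing.Theory Num.Theory.
Local Open Scope ring_scope.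

Section SL.
Variables (C : numClosedFieldType) (n : nat).

Definition adjmx (A : 'M[C]_(n.+1)) : 'M[C]_(n.+1) := (map_mx Num.conj A)^T.

Definition hip (X Y : 'M[C]_(n.+1)) : C := \tr (X *m adjmx Y).

Definition in_sl (X : 'M[C]_(n.+1)) : Prop := \tr X = 0.

Definition lie (X Y : 'M[C]_(n.+1)) : 'M[C]_(n.+1) := X *m Y - Y *m X.

(* the matrix I = sqrt(1/(n(n+1))) diag(id_n, -n) (index ord_max is the (n+1)-th) *)
Definition Imat : 'M[C]_(n.+1) :=
  sqrtC ((n * n.+1)%:R^-1) *:
    \matrix_(i, j) (if i == j then (if i == ord_max then - n%:R else 1) else 0).

(* orthogonal projection onto s = span {e_{i,n+1}, e_{n+1,i} : i <= n} *)
Definition proj_s (X : 'M[C]_(n.+1)) : 'M[C]_(n.+1) :=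
  \matrix_(i, j) (if (i == ord_max) (+) (j == ord_max) then X i j else 0).

Definition proj_I (X : 'M[C]_(n.+1)) : 'M[C]_(n.+1) := hip X Imat *: Imat.

(* orthogonal projection (on sl_{n+1}) onto sl_n embedded as upper-left block *)
Definition proj_sln (X : 'M[C]_(n.+1)) : 'M[C]_(n.+1) := X - proj_I X - proj_s X.

Definition sigma (x y z : C) (X : 'M[C]_(n.+1)) : 'M[C]_(n.+1) :=
  x^-1 *: proj_sln X + y^-1 *: proj_I X + z^-1 *: proj_s X.

Definition gxyz (x y z : C) (X Y : 'M[C]_(n.+1)) : C := hip (sigma x y z X) Y.

Definition unitary_basis (g : 'M[C]_(n.+1) -> 'M[C]_(n.+1) -> C)
    (d : nat) (e : 'I_d -> 'M[C]_(n.+1)) : Prop :=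
  (forall i, in_sl (e i)) /\
  (forall i j, g (e i) (e j) = (i == j)%:R) /\
  (forall X, in_sl X -> exists a : 'I_d -> C, X = \sum_(i < d) a i *: e i).

Definition torsion_form (g : 'M[C]_(n.+1) -> 'M[C]_(n.+1) -> C)
    (d : nat) (e : 'I_d -> 'M[C]_(n.+1)) (X : 'M[C]_(n.+1)) : C :=
  \sum_(i < d) \sum_(j < d | (i < j)%N) `|g (lie (e i) (e j)) X| ^+ 2.

Definition is_twisted_chern_ricci (g : 'M[C]_(n.+1) -> 'M[C]_(n.+1) -> C)
    (P : 'M[C]_(n.+1) -> 'M[C]_(n.+1)) : Prop :=
  (forall X, in_sl X -> in_sl (P X)) /\
  (forall X Y, in_sl X -> in_sl Y -> P (X + Y) = P X + P Y) /\
  (forall (c : C) X, in_sl X -> P (c *: X) = c *: P X) /\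
  (forall X Y, in_sl X -> in_sl Y -> g (P X) Y = g X (P Y)) /\
  (forall d (e : 'I_d -> 'M[C]_(n.+1)), unitary_basis g e ->
     forall X, in_sl X -> g (P X) X = torsion_form g e X).

Definition Pclaim (x y z : C) (X : 'M[C]_(n.+1)) : 'M[C]_(n.+1) :=
  (n%:R * x + z ^+ 2 / x) *: proj_sln X
  + (n.+1%:R * (z ^+ 2 / y)) *: proj_I X
  + (n.+1%:R / n%:R * ((n.-1)%:R * x + y)) *: proj_s X.

End SL.

(* Main.v *)
Require Import Defs.
From mathcomp Require Import all_boot all_order all_algebra.
From mathcomp Require Import ring.
Set Implicit Arguments. Unset Strict Implicit. Unset Printing Implicit Defensive.
Import Order.TTheory GRing.Theory Num.Theory.
Local Open Scope ring_scope.

Section Main.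
Variables (C : numClosedFieldType) (n : nat).
Local Notation N := n.+1.
Local Notation M := 'M[C]_N.
Implicit Types A B X Y Z E K : M.
Local Notation mx := (@ord_max n).

Definition D : M := delta_mx mx mx.
Definition J : M := 1%:M - N%:R *: D.

Lemma deltaMl (a b : 'I_N) Y i j : (delta_mx a b *m Y) i j = (i == a)%:R * Y b j.
Proof.
rewrite mxE (bigD1 b) //= big1 => [|k kb]; first by rewrite !mxE eqxx andbT addr0.
by rewrite !mxE (negbTE kb) andbF mul0r.
Qed.

Lemma deltaMr (a b : 'I_N) Y i j : (Y *m delta_mx a b) i j = Y i a * (j == b)%:R.
Proof.
rewrite mxE (bigD1 a) //= big1 => [|k ka]; first by rewrite !mxE eqxx /= addr0.
by rewrite !mxE (negbTE ka) mulr0.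
Qed.

Lemma mxtraceN A : \tr (- A) = - \tr A.
Proof. by rewrite -scaleN1r mxtraceZ mulN1r. Qed.
Lemma mxtraceB A B : \tr (A - B) = \tr A - \tr B.
Proof. by rewrite mxtraceD mxtraceN. Qed.

Lemma D2 : D *m D = D.
Proof. by rewrite /D mul_delta_mx. Qed.

Lemma trD : \tr D = 1.
Proof.
rewrite /mxtrace (bigD1 mx) //= big1 => [|i /negbTE h]; first by rewrite !mxE eqxx addr0.
by rewrite !mxE h.
Qed.

Lemma trDY Y : \tr (D *m Y) = Y mx mx.
Proof.
rewrite /mxtrace (bigD1 mx) //= big1 => [|i /negbTE h]; first by rewrite deltaMl eqxx mul1r addr0.
by rewrite deltaMl h mul0r.
Qed.

Lemma trYD Y : \tr (Y *m D) = Y mx mx.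
Proof. by rewrite mxtrace_mulC trDY. Qed.

Lemma DYD Y : D *m Y *m D = Y mx mx *: D.
Proof.
apply/matrixP => i j; rewrite deltaMr deltaMl !mxE.
by case: (i == mx); case: (j == mx); rewrite /= ?mulr1 ?mulr0 ?mul1r ?mul0r.
Qed.

Lemma hipE A B : hip A B = \sum_i \sum_j A i j * (B i j)^*.
Proof.
rewrite /hip /mxtrace; apply: eq_bigr => i _; rewrite mxE.
by apply: eq_bigr => j _; rewrite /adjmx !mxE.
Qed.

Lemma hipDl A B Z : hip (A + B) Z = hip A Z + hip B Z.
Proof. by rewrite /hip mulmxDl mxtraceD. Qed.
Lemma hipZl k A Z : hip (k *: A) Z = k * hip A Z.
Proof. by rewrite /hip -scalemxAl mxtraceZ. Qed.
Lemma hipNl A Z : hip (- A) Z = - hip A Z.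
Proof. by rewrite -scaleN1r hipZl mulN1r. Qed.
Lemma hipBl A B Z : hip (A - B) Z = hip A Z - hip B Z.
Proof. by rewrite hipDl hipNl. Qed.
Lemma hip0l Z : hip 0 Z = 0.
Proof. by rewrite -(scale0r 0) hipZl mul0r. Qed.

Lemma hip_conj A B : (hip A B)^* = hip B A.
Proof.
rewrite !hipE rmorph_sum /=; apply: eq_bigr => i _.
rewrite rmorph_sum; apply: eq_bigr => j _ /=.
by rewrite rmorphM /= conjCK mulrC.
Qed.

Lemma hipDr A B Z : hip Z (A + B) = hip Z A + hip Z B.
Proof. by rewrite -[LHS]conjCK hip_conj hipDl rmorphD /= !hip_conj. Qed.
Lemma hipZr k A Z : hip Z (k *: A) = k^* * hip Z A.
Proof. by rewrite -[LHS]conjCK hip_conj hipZl rmorphM /= !hip_conj. Qed.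
Lemma hipNr A Z : hip Z (- A) = - hip Z A.
Proof. by rewrite -scaleN1r hipZr rmorphN1 mulN1r. Qed.
Lemma hipBr A B Z : hip Z (A - B) = hip Z A - hip Z B.
Proof. by rewrite hipDr hipNr. Qed.
Lemma hip0r Z : hip Z 0 = 0.
Proof. by rewrite -(scale0r 0) hipZr rmorph0 mul0r. Qed.

Lemma adjmxM A B : adjmx (A *m B) = adjmx B *m adjmx A.
Proof. by rewrite /adjmx map_mxM trmx_mul. Qed.
Lemma adjmxK A : adjmx (adjmx A) = A.
Proof. by apply/matrixP => i j; rewrite /adjmx !mxE conjCK. Qed.
Lemma adjmxD A B : adjmx (A + B) = adjmx A + adjmx B.
Proof. by apply/matrixP => i j; rewrite /adjmx !mxE rmorphD. Qed.
Lemma adjmxZ k A : adjmx (k *: A) = k^* *: adjmx A.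
Proof. by apply/matrixP => i j; rewrite /adjmx !mxE rmorphM. Qed.
Lemma adjmxN A : adjmx (- A) = - adjmx A.
Proof. by apply/matrixP => i j; rewrite /adjmx !mxE rmorphN. Qed.
Lemma adjmxB A B : adjmx (A - B) = adjmx A - adjmx B.
Proof. by rewrite adjmxD adjmxN. Qed.
Lemma tr_adj A : \tr (adjmx A) = (\tr A)^*.
Proof. by rewrite /mxtrace rmorph_sum; apply: eq_bigr => i _; rewrite /adjmx !mxE. Qed.
Lemma adjD : adjmx D = D.
Proof. by apply/matrixP => i j; rewrite /adjmx /D !mxE rmorph_nat andbC. Qed.
Lemma adj1 : adjmx (1%:M : M) = 1%:M.
Proof. by apply/matrixP => i j; rewrite /adjmx !mxE rmorph_nat eq_sym. Qed.
Lemma adjJ : adjmx J = J.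
Proof. by rewrite /J adjmxB adj1 adjmxZ conjC_nat adjD. Qed.

Lemma hip_mull A B Z : hip (A *m B) Z = hip B (adjmx A *m Z).
Proof.
by rewrite /hip adjmxM adjmxK -mulmxA mxtrace_mulC !mulmxA.
Qed.
Lemma hip_mulr A B Z : hip (A *m B) Z = hip A (Z *m adjmx B).
Proof. by rewrite /hip adjmxM adjmxK mulmxA. Qed.

Lemma hip_adj A B : hip (adjmx A) B = hip (adjmx B) A.
Proof.
by rewrite /hip mxtrace_mulC.
Qed.

Lemma JE i j : J i j = (i == j)%:R - N%:R * ((i == mx) && (j == mx))%:R.
Proof. by rewrite /J !mxE. Qed.

Lemma Imat_J : Imat C n = sqrtC ((n * N)%:R^-1) *: J.
Proof.
rewrite /Imat; congr (_ *: _); apply/matrixP => i j; rewrite JE !mxE.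
case: eqP => [<-|/eqP ij]; last first.
  by rewrite andbC; case: eqP => [E|]; [move: ij; rewrite E; case: eqP|]; rewrite ?mulr0 ?subr0.
by case: (i == mx); rewrite ?mulr1 ?mulr0 ?subr0 // -natr1 opprD addrC subrK.
Qed.

Definition sq : C := sqrtC ((n * N)%:R^-1).
Lemma sq_conj : sq^* = sq.
Proof. by apply: conj_Creal; apply: sqrtC_real; rewrite invr_ge0 ler0n. Qed.
Lemma sq2 : sq * sq = (n * N)%:R^-1.
Proof. by rewrite -expr2 sqrtCK. Qed.

Lemma hipJ Y : hip Y J = \tr (Y *m J).
Proof. by rewrite /hip adjJ. Qed.

Lemma PIE Y : proj_I Y = ((n * N)%:R^-1 * \tr (Y *m J)) *: J.
Proof.
rewrite /proj_I Imat_J -/sq hipZr sq_conj hipJ scalerA; congr (_ *: _).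
by rewrite mulrC mulrA sq2.
Qed.

Lemma PSE Y : proj_s Y = D *m Y + Y *m D - 2%:R *: (D *m Y *m D).
Proof.
apply/matrixP => i j; rewrite DYD /D; rewrite !(deltaMl, deltaMr, mxE).
case: (eqVneq i mx) => [->|ni]; case: (eqVneq j mx) => [->|nj] /=;
  rewrite ?eqxx ?mulr1 ?mulr0 ?mul1r ?mul0r ?addr0 ?add0r ?subr0 ?(negbTE ni) ?(negbTE nj) //=.
all: ring.
Qed.

Lemma trPS Y : \tr (proj_s Y) = 0.
Proof. by rewrite /mxtrace big1 // => i _; rewrite !mxE addbb. Qed.

Lemma trJ : \tr J = 0.
Proof. by rewrite /J mxtraceB mxtraceZ trD mxtrace1 mulr1 subrr. Qed.

Lemma trPI Y : \tr (proj_I Y) = 0.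
Proof. by rewrite PIE mxtraceZ trJ mulr0. Qed.

Lemma PS_lin k A B : proj_s (k *: A + B) = k *: proj_s A + proj_s B.
Proof.
apply/matrixP => i j; rewrite !mxE; case: ifP => _ //.
by rewrite mulr0 addr0.
Qed.

Lemma PI_lin k A B : proj_I (k *: A + B) = k *: proj_I A + proj_I B.
Proof.
rewrite !PIE mulmxDl mxtraceD -scalemxAl mxtraceZ scalerA -scalerDl.
by congr (_ *: _); rewrite mulrDr mulrCA.
Qed.

Lemma trJJ : \tr (J *m J) = (n * N)%:R.
Proof.
rewrite /J mulmxBl !mulmxBr !mul1mx !mulmx1 -!scalemxAl -!scalemxAr D2 scalerA.
rewrite !mxtraceB !mxtraceZ trD mxtrace1 !mulr1 natrM -natr1.
ring.
Qed.


Lemma PS_D A B : proj_s (A + B) = proj_s A + proj_s B.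
Proof. have := PS_lin 1 A B. by rewrite !scale1r. Qed.
Lemma PS_0 : proj_s (0 : M) = 0.
Proof. by apply/matrixP => i j; rewrite !mxE; case: ifP. Qed.
Lemma PS_Z k A : proj_s (k *: A) = k *: proj_s A.
Proof. by rewrite -[k *: A]addr0 PS_lin PS_0 addr0. Qed.
Lemma PS_N A : proj_s (- A) = - proj_s A.
Proof. by rewrite -scaleN1r PS_Z scaleN1r. Qed.
Lemma PS_B A B : proj_s (A - B) = proj_s A - proj_s B.
Proof. by rewrite PS_D PS_N. Qed.

Lemma PI_D A B : proj_I (A + B) = proj_I A + proj_I B.
Proof. have := PI_lin 1 A B. by rewrite !scale1r. Qed.
Lemma PI_0 : proj_I (0 : M) = 0.
Proof. by rewrite PIE mul0mx mxtrace0 mulr0 scale0r. Qed.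
Lemma PI_Z k A : proj_I (k *: A) = k *: proj_I A.
Proof. by rewrite -[k *: A]addr0 PI_lin PI_0 addr0. Qed.
Lemma PI_N A : proj_I (- A) = - proj_I A.
Proof. by rewrite -scaleN1r PI_Z scaleN1r. Qed.
Lemma PI_B A B : proj_I (A - B) = proj_I A - proj_I B.
Proof. by rewrite PI_D PI_N. Qed.

Lemma trPSJ Y : \tr (proj_s Y *m J) = 0.
Proof.
rewrite -hipJ hipE big1 // => i _; rewrite big1 // => j _; rewrite JE !mxE.
case: (eqVneq i j) => [<-|ij]; first by rewrite addbb mul0r.
have -> : (i == mx) && (j == mx) = false.
  by apply/negbTE; apply: contra ij => /andP[/eqP-> /eqP->].
by rewrite mulr0 subr0 rmorph0 mulr0.
Qed.

Lemma PI_PS Y : proj_I (proj_s Y) = 0.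
Proof. by rewrite PIE trPSJ mulr0 scale0r. Qed.

Lemma PS_J : proj_s J = 0.
Proof.
apply/matrixP => i j; rewrite [LHS]mxE [RHS]mxE JE; case: ifP => // h.
have ij : i != j by apply: contraTneq h => ->; rewrite addbb.
have -> : (i == mx) && (j == mx) = false.
  by apply/negbTE; apply: contra ij => /andP[/eqP-> /eqP->].
by rewrite (negbTE ij) mulr0 subr0.
Qed.

Lemma PS_PI Y : proj_s (proj_I Y) = 0.
Proof. by rewrite PIE PS_Z PS_J scaler0. Qed.

Lemma PS_PS Y : proj_s (proj_s Y) = proj_s Y.
Proof. by apply/matrixP => i j; rewrite !mxE; case: ((_ == mx) (+) (_ == mx)). Qed.

Hypothesis n0 : (0 < n)%N.

Lemma nN0 : (n * N)%:R != 0 :> C.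
Proof. by rewrite pnatr_eq0 muln_eq0 negb_or -lt0n n0. Qed.

Lemma PI_PI Y : proj_I (proj_I Y) = proj_I Y.
Proof.
rewrite [proj_I Y]PIE PI_Z PIE trJJ mulVf ?nN0 // scale1r.
by rewrite -PIE.
Qed.

Lemma PI_sa A B : hip (proj_I A) B = hip A (proj_I B).
Proof.
by rewrite /proj_I hipZl hipZr hip_conj mulrC.
Qed.

Lemma PS_sa A B : hip (proj_s A) B = hip A (proj_s B).
Proof.
rewrite !hipE; apply: eq_bigr => i _; apply: eq_bigr => j _; rewrite !mxE.
by case: ifP; rewrite ?rmorph0 ?mulr0 ?mul0r.
Qed.

Lemma PS_adj A : adjmx (proj_s A) = proj_s (adjmx A).
Proof. by apply/matrixP => i j; rewrite /adjmx !mxE addbC; case: ifP; rewrite ?rmorph0. Qed.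

Lemma PI_adj A : adjmx (proj_I A) = proj_I (adjmx A).
Proof.
rewrite !PIE adjmxZ adjJ; congr (_ *: _).
rewrite rmorphM /= fmorphV /= conjC_nat; congr (_ * _).
by rewrite -tr_adj adjmxM adjJ mxtrace_mulC.
Qed.

Definition Op (a b c : C) Y := a *: proj_sln Y + b *: proj_I Y + c *: proj_s Y.

Lemma Op_lin a b c k A B : Op a b c (k *: A + B) = k *: Op a b c A + Op a b c B.
Proof.
rewrite /Op /proj_sln PS_lin PI_lin.
move: (proj_s A) (proj_s B) (proj_I A) (proj_I B) => a1 a2 a3 a4.
by apply/matrixP => i j; rewrite !mxE; ring.
Qed.

Lemma Op_comp a b c a' b' c' Y :
  Op a b c (Op a' b' c' Y) = Op (a * a') (b * b') (c * c') Y.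
Proof.
rewrite /Op /proj_sln !(PI_D, PI_N, PI_Z, PS_D, PS_N, PS_Z, PI_PI, PS_PS, PI_PS, PS_PI).
move: (proj_s Y) (proj_I Y) => a1 a2.
by apply/matrixP => i j; rewrite !mxE; ring.
Qed.

Lemma Op1 Y : Op 1 1 1 Y = Y.
Proof.
rewrite /Op /proj_sln; move: (proj_s Y) (proj_I Y) => a1 a2.
by apply/matrixP => i j; rewrite !mxE; ring.
Qed.

Lemma Op_sa a b c A B : a^* = a -> b^* = b -> c^* = c ->
  hip (Op a b c A) B = hip A (Op a b c B).
Proof.
move=> ra rb rc; rewrite /Op /proj_sln.
have h1 := PI_sa A B; have h2 := PS_sa A B.
move: (proj_I A) (proj_I B) (proj_s A) (proj_s B) h1 h2 => pa pb sa sb h1 h2.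
rewrite !(hipDl, hipNl, hipZl, hipDr, hipNr, hipZr) ra rb rc h1 h2.
ring.
Qed.

Lemma Op_adj a b c A : a^* = a -> b^* = b -> c^* = c ->
  adjmx (Op a b c A) = Op a b c (adjmx A).
Proof.
move=> ra rb rc; rewrite /Op /proj_sln.
have h1 := PI_adj A; have h2 := PS_adj A.
move: (proj_I A) (proj_I (adjmx A)) (proj_s A) (proj_s (adjmx A)) h1 h2 => pa pb sa sb h1 h2.
by rewrite !(adjmxD, adjmxN, adjmxZ) ra rb rc h1 h2.
Qed.

Lemma Op_tr a b c A : \tr (Op a b c A) = a * \tr A.
Proof.
rewrite /Op /proj_sln; have h1 := trPI A; have h2 := trPS A.
move: (proj_I A) (proj_s A) h1 h2 => pa sa h1 h2.
rewrite !(mxtraceD, mxtraceN, mxtraceZ) h1 h2; ring.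
Qed.

Lemma OpE a b c Y : Op a b c Y = a *: Y
  + ((b - a) * ((n * N)%:R^-1 * \tr (Y *m J))) *: J
  + (c - a) *: (D *m Y + Y *m D - 2%:R *: (D *m Y *m D)).
Proof.
rewrite /Op /proj_sln PIE PSE.
move: (D *m Y) (Y *m D) (D *m Y *m D) (\tr (Y *m J)) => a1 a2 a3 t.
by apply/matrixP => i j; rewrite !mxE; ring.
Qed.

Definition Tr (F : M -> M) : C := \sum_a \sum_b F (delta_mx a b) a b.

Lemma Tr_ext F G : (forall E, F E = G E) -> Tr F = Tr G.
Proof. by move=> h; rewrite /Tr; apply: eq_bigr => a _; apply: eq_bigr => b _; rewrite h. Qed.

Lemma Tr_add F G : Tr (fun E => F E + G E) = Tr F + Tr G.
Proof.
rewrite /Tr -big_split; apply: eq_bigr => a _; rewrite -big_split.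
by apply: eq_bigr => b _; rewrite mxE.
Qed.

Lemma Tr_scale k F : Tr (fun E => k *: F E) = k * Tr F.
Proof.
rewrite /Tr mulr_sumr; apply: eq_bigr => a _; rewrite mulr_sumr.
by apply: eq_bigr => b _; rewrite mxE.
Qed.

Lemma Tr_opp F : Tr (fun E => - F E) = - Tr F.
Proof. by rewrite -mulN1r -Tr_scale; apply: Tr_ext => E; rewrite scaleN1r. Qed.

Lemma Tr_sub F G : Tr (fun E => F E - G E) = Tr F - Tr G.
Proof. by rewrite Tr_add Tr_opp. Qed.

Lemma Tr_mon A B : Tr (fun E => A *m E *m B) = \tr A * \tr B.
Proof.
rewrite /Tr /mxtrace big_distrl; apply: eq_bigr => a _ /=.
rewrite big_distrr; apply: eq_bigr => b _ /=.
rewrite mxE (bigD1 b) //= big1 => [|k kb]; last by rewrite deltaMr (negbTE kb) mulr0 mul0r.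
by rewrite deltaMr eqxx mulr1 addr0.
Qed.

Lemma tr_delta K (a b : 'I_N) : \tr (K *m delta_mx a b) = K b a.
Proof.
rewrite /mxtrace (bigD1 b) //= big1 => [|k kb]; last by rewrite deltaMr (negbTE kb) mulr0.
by rewrite deltaMr eqxx mulr1 addr0.
Qed.

Lemma Tr_rk K A : Tr (fun E => \tr (K *m E) *: A) = \tr (K *m A).
Proof.
rewrite /Tr /mxtrace exchange_big; apply: eq_bigr => b _; rewrite mxE.
by apply: eq_bigr => a _; have := tr_delta K a b; rewrite /mxtrace mxE => ->.
Qed.

Definition islin (f : M -> M) := forall k A B, f (k *: A + B) = k *: f A + f B.

Lemma lin0 f : islin f -> f 0 = 0.
Proof.
move=> h; have := h 1 0 0; rewrite !scale1r addr0 => /(congr1 (fun v => v - f 0)).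
by rewrite subrr addrK => <-.
Qed.

Lemma linD f : islin f -> forall A B, f (A + B) = f A + f B.
Proof. by move=> h A B; have := h 1 A B; rewrite !scale1r. Qed.

Lemma linZ f : islin f -> forall k A, f (k *: A) = k *: f A.
Proof. by move=> h k A; have := h k A 0; rewrite !addr0 (lin0 h) addr0. Qed.

Lemma lin_sum f I r (P : pred I) (F : I -> M) : islin f ->
  f (\sum_(i <- r | P i) F i) = \sum_(i <- r | P i) f (F i).
Proof. by move=> h; apply: (big_morph f (linD h) (lin0 h)). Qed.

Lemma tr_sum I r (P : pred I) (F : I -> M) :
  \tr (\sum_(i <- r | P i) F i) = \sum_(i <- r | P i) \tr (F i).
Proof. by apply: (big_morph _ (@mxtraceD _ _) (mxtrace0 _ _)). Qed.

Lemma Tr_rkG G K A : islin G ->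
  Tr (fun E => \tr (G E *m K) *: A) = \tr (G A *m K).
Proof.
move=> hG; rewrite [in RHS](matrix_sum_delta A) lin_sum // mulmx_suml tr_sum.
rewrite /Tr; apply: eq_bigr => a _; rewrite lin_sum // mulmx_suml tr_sum.
apply: eq_bigr => b _; rewrite mxE linZ // -scalemxAl mxtraceZ mulrC.
done.
Qed.

Variables (x y z : C) (W V : M).
Local Notation W' := V.
Local Notation tau := (Op x y z).
Definition al : C := (y - x) * (n * N)%:R^-1.
Definition Hm E := tau (lie W' E).
Definition Qm : M := J *m W' - W' *m J.

Lemma trQ E : \tr ((W' *m E - E *m W') *m J) = \tr (Qm *m E).
Proof.
have e1 : \tr (W' *m E *m J) = \tr (J *m W' *m E) by rewrite mxtrace_mulC mulmxA.
have e2 : \tr (E *m W' *m J) = \tr (W' *m J *m E) by rewrite -mulmxA mxtrace_mulC.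
by rewrite /Qm [in LHS]mulmxBl [in RHS]mulmxBl !mxtraceB e1 e2.
Qed.

Lemma scmxl k A B : (k *: A) *m B = k *: (A *m B).
Proof. by rewrite scalemxAl. Qed.
Lemma scmxr k A B : A *m (k *: B) = k *: (A *m B).
Proof. by rewrite scalemxAr. Qed.

Ltac mxnorm := rewrite ?(mulmxDl, mulmxDr, mulmxBl, mulmxBr, mulNmx, mulmxN,
   scmxl, scmxr, scalerA, mulmxA, scalerDr, scalerBr, scalerN).

Lemma Hm_exp A B E : A *m Hm E *m B =
    x *: (A *m W' *m E *m B) - x *: (A *m E *m (W' *m B))
  + al *: (\tr (Qm *m E) *: (A *m J *m B))
  + (z - x) *: (A *m D *m W' *m E *m B) + (z - x) *: (A *m W' *m E *m (D *m B))
  - (2%:R * (z - x)) *: (A *m D *m W' *m E *m (D *m B))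
  - (z - x) *: (A *m D *m E *m (W' *m B)) - (z - x) *: (A *m E *m (W' *m D *m B))
  + (2%:R * (z - x)) *: (A *m D *m E *m (W' *m D *m B)).
Proof.
rewrite /Hm OpE /lie trQ /al; move: (\tr (Qm *m E)) => t.
mxnorm.
by apply/matrixP => i j; rewrite !mxE; ring.
Qed.

Definition PhiF A B :=
    x * (\tr (A *m W') * \tr B - \tr A * \tr (W' *m B))
  + al * \tr (Qm *m (A *m J *m B))
  + (z - x) * (\tr (A *m D *m W') * \tr B + \tr (A *m W') * \tr (D *m B)
      - 2%:R * (\tr (A *m D *m W') * \tr (D *m B))
      - \tr (A *m D) * \tr (W' *m B) - \tr A * \tr (W' *m D *m B)
      + 2%:R * (\tr (A *m D) * \tr (W' *m D *m B))).

Lemma Tr_Phi A B : Tr (fun E => A *m Hm E *m B) = PhiF A B.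
Proof.
rewrite /PhiF (Tr_ext (Hm_exp A B)) !(Tr_add, Tr_opp, Tr_scale) Tr_rk !Tr_mon.
ring.
Qed.

Lemma DDl X : X *m D *m D = X *m D.
Proof. by rewrite -mulmxA D2. Qed.
Lemma XDYD X Y : X *m D *m Y *m D = Y mx mx *: (X *m D).
Proof. by rewrite -!mulmxA (mulmxA D) DYD scmxr. Qed.
Lemma DYYD Y1 Y2 : D *m Y1 *m Y2 *m D = (Y1 *m Y2) mx mx *: D.
Proof. by rewrite -(mulmxA D) DYD. Qed.
Lemma XDYYD X Y1 Y2 : X *m D *m Y1 *m Y2 *m D = (Y1 *m Y2) mx mx *: (X *m D).
Proof. by rewrite -(mulmxA _ Y1) XDYD. Qed.
Lemma trDYY Y1 Y2 : \tr (D *m Y1 *m Y2) = (Y1 *m Y2) mx mx.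
Proof. by rewrite -mulmxA trDY. Qed.
Lemma trXDY X Y : \tr (X *m D *m Y) = (Y *m X) mx mx.
Proof. by rewrite mxtrace_mulC mulmxA trYD. Qed.

Ltac fullnorm := 
  rewrite ?(mulmxDl, mulmxDr, mulmxBl, mulmxBr, mulNmx, mulmxN, mul1mx, mulmx1,
   scmxl, scmxr, scalerA, mulmxA, scalerDr, scalerBr, scalerN,
   D2, DDl, XDYYD, DYYD, XDYD, DYD, mxtraceD, mxtraceN, mxtraceZ);
  rewrite ?(trDYY, trXDY, trYD, trDY, trD, mxtrace1).

Hypotheses (trW : \tr W = 0) (trV : \tr V = 0).
Local Notation a1 := (\tr (W *m V)).
Local Notation a2 := ((W *m V) mx mx).
Local Notation a3 := ((V *m W) mx mx).
Local Notation pq := (W mx mx * V mx mx).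

Lemma trVW : \tr (V *m W) = \tr (W *m V).
Proof. exact: mxtrace_mulC. Qed.

Ltac fin := rewrite ?trVW ?trW ?trV -?natr1; ring.

Lemma Phi1 : PhiF W 1%:M = x * N%:R * a1 + al * N%:R * (n%:R * a3 + a2 - N%:R * pq)
  + (z - x) * (N%:R * a3 + a1 - 2%:R * a3 + 2%:R * pq).
Proof. rewrite /PhiF /Qm /J; fullnorm; fin. Qed.

Lemma Phi2 : PhiF 1%:M W = - x * N%:R * a1 - al * N%:R * (a3 - N%:R * pq - a2 + N%:R * a2)
  + (z - x) * (- 2%:R * pq - a1 - N%:R * a2 + 2%:R * a2).
Proof. rewrite /PhiF /Qm /J; fullnorm; fin. Qed.

Lemma Phi3 : PhiF (D *m W) 1%:M = x * N%:R * a2 - al * N%:R * (pq - a2)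
  + (z - x) * (N%:R * pq + a2 - pq).
Proof. rewrite /PhiF /Qm /J; fullnorm; fin. Qed.

Lemma Phi4 : PhiF D W = - x * a1 + al * n%:R * N%:R * (pq - a2)
  + (z - x) * (- pq - a1 + a2).
Proof. rewrite /PhiF /Qm /J; fullnorm; fin. Qed.

Lemma Phi5 : PhiF W D = x * a1 + al * n%:R * N%:R * (a3 - pq)
  + (z - x) * (a1 - a3 + pq).
Proof. rewrite /PhiF /Qm /J; fullnorm; fin. Qed.

Lemma Phi6 : PhiF 1%:M (W *m D) = - x * N%:R * a3 - al * N%:R * (a3 - pq)
  + (z - x) * (pq - a3 - N%:R * pq).
Proof. rewrite /PhiF /Qm /J; fullnorm; fin. Qed.

Lemma Phi7 : PhiF (D *m W) D = x * (a2 - pq) + (z - x) * (a2 - pq).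
Proof. rewrite /PhiF /Qm /J; fullnorm; fin. Qed.

Lemma Phi8 : PhiF D (W *m D) = x * (pq - a3) + (z - x) * (pq - a3).
Proof. rewrite /PhiF /Qm /J; fullnorm; fin. Qed.

Lemma Rk1 : \tr (lie W (Hm J) *m J) = N%:R * N%:R * z * (a2 + a3 - 2%:R * pq).
Proof. rewrite /Hm OpE /lie /J; fullnorm; fin. Qed.

Lemma lie_lin X k A B : lie X (k *: A + B) = k *: lie X A + lie X B.
Proof.
rewrite /lie; mxnorm.
by apply/matrixP => i j; rewrite !mxE; ring.
Qed.

Lemma lie1 X : lie X 1%:M = 0.
Proof. by rewrite /lie mulmx1 mul1mx subrr. Qed.

Lemma Hm_lin : islin Hm.
Proof. by move=> k A B; rewrite /Hm lie_lin Op_lin. Qed.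

Lemma G_lin : islin (fun E => lie W (Hm E)).
Proof. by move=> k A B /=; rewrite Hm_lin lie_lin. Qed.

Lemma T_exp K : tau (lie W K) =
    x *: (W *m K *m 1%:M) - x *: (1%:M *m K *m W)
  + al *: (\tr (lie W K *m J) *: J)
  + (z - x) *: (D *m W *m K *m 1%:M) - (z - x) *: (D *m K *m W)
  + (z - x) *: (W *m K *m D) - (z - x) *: (1%:M *m K *m (W *m D))
  - (2%:R * (z - x)) *: (D *m W *m K *m D)
  + (2%:R * (z - x)) *: (D *m K *m (W *m D)).
Proof.
rewrite OpE /al; move: (\tr (lie W K *m J)) => t; rewrite /lie.
mxnorm; rewrite !mulmx1 !mul1mx.
by apply/matrixP => i j; rewrite !mxE; ring.
Qed.

Lemma predn_nat : (n.-1)%:R = n%:R - 1 :> C.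
Proof. by case: n n0 => // m _ /=; rewrite -natr1 addrK. Qed.

Lemma Tr_T_val (x0 : x != 0) (y0 : y != 0) :
  Tr (fun E => tau (lie W (Hm E))) = 2%:R * \tr (Op (x * (n%:R * x + z ^+ 2 / x))
     (y * (N%:R * (z ^+ 2 / y))) (z * (N%:R / n%:R * ((n.-1)%:R * x + y))) W *m V).
Proof.
rewrite (Tr_ext (fun E => T_exp (Hm E))) !(Tr_add, Tr_opp, Tr_scale) !Tr_Phi (Tr_rkG _ _ G_lin).
rewrite Phi1 Phi2 Phi3 Phi4 Phi5 Phi6 Phi7 Phi8 Rk1.
rewrite OpE /J; fullnorm.
rewrite ?trVW ?trW ?trV /al natrM predn_nat -natr1.
have nz : n%:R != 0 :> C by rewrite pnatr_eq0 -lt0n n0.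
have nz1 : n%:R + 1 != 0 :> C by rewrite natr1 pnatr_eq0.
by field; rewrite ?nz ?nz1 ?x0 ?y0.
Qed.
End Main.

Section B.
Variables (C : numClosedFieldType) (n : nat) (x y z : C).
Hypotheses (n0 : (0 < n)%N) (hx : 0 < x) (hy : 0 < y) (hz : 0 < z).
Local Notation N := n.+1.
Local Notation M := 'M[C]_N.
Implicit Types A B X Y Z E K u v a W V : M.
Local Notation g := (@gxyz C n x y z).
Local Notation sig := (@Op C n x^-1 y^-1 z^-1).
Local Notation tau := (@Op C n x y z).

Lemma pos_conj (r : C) : 0 < r -> r^* = r.
Proof. by move=> h; apply/conj_Creal/gtr0_real. Qed.

Let xr : x^* = x := pos_conj hx.
Let yr : y^* = y := pos_conj hy.
Let zr : z^* = z := pos_conj hz.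
Let xir : x^-1^* = x^-1.
Proof. by apply: pos_conj; rewrite invr_gt0. Qed.
Let yir : y^-1^* = y^-1.
Proof. by apply: pos_conj; rewrite invr_gt0. Qed.
Let zir : z^-1^* = z^-1.
Proof. by apply: pos_conj; rewrite invr_gt0. Qed.

Lemma gE A B : g A B = hip (sig A) B.
Proof. by []. Qed.

Lemma st Y : sig (tau Y) = Y.
Proof. by rewrite Op_comp // !mulVf ?lt0r_neq0 // Op1. Qed.
Lemma ts Y : tau (sig Y) = Y.
Proof. by rewrite Op_comp // !mulfV ?lt0r_neq0 // Op1. Qed.

Lemma sig_sa A B : hip (sig A) B = hip A (sig B).
Proof. by rewrite Op_sa. Qed.
Lemma tau_sa A B : hip (tau A) B = hip A (tau B).
Proof. by rewrite Op_sa. Qed.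

Lemma g_conj A B : (g A B)^* = g B A.
Proof. by rewrite !gE hip_conj sig_sa. Qed.

Lemma g_lin k A B Z : g (k *: A + B) Z = k * g A Z + g B Z.
Proof. by rewrite !gE Op_lin hipDl hipZl. Qed.

Lemma g_sum d (a : 'I_d -> C) (e : 'I_d -> M) Z :
  g (\sum_i a i *: e i) Z = \sum_i a i * g (e i) Z.
Proof.
have hD : {morph (fun A => g A Z) : A B / A + B >-> A + B}.
  by move=> A B /=; have := g_lin 1 A B Z; rewrite scale1r mul1r; apply.
have h0 : g 0 Z = 0.
  by rewrite gE (lin0 (Op_lin _ _ _)) hip0l.
rewrite (big_morph (fun A => g A Z) hD h0); apply: eq_bigr => i _.
by have := g_lin (a i) (e i) 0 Z; rewrite addr0 h0 addr0; apply.
Qed.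

Lemma adj_lie A B : adjmx (lie A B) = lie (adjmx B) (adjmx A).
Proof. by rewrite /lie adjmxB !adjmxM. Qed.

Lemma tr_lie A B : \tr (lie A B) = 0.
Proof. by rewrite /lie mxtraceB mxtrace_mulC subrr. Qed.

Lemma hip_lie1 u v Z : hip (lie u v) Z = hip v (lie (adjmx u) Z).
Proof. by rewrite /lie hipBl hip_mull hip_mulr hipBr. Qed.

Lemma hip_lie2 a W V : hip (lie a W) V = hip a (lie V (adjmx W)).
Proof. by rewrite /lie hipBl hip_mulr hip_mull hipBr. Qed.

Lemma hip1 B : hip 1%:M B = (\tr B)^*.
Proof. by rewrite /hip mul1mx tr_adj. Qed.

Lemma hip_delta (a b : 'I_N) B : hip (delta_mx a b) B = (B a b)^*.
Proof. by rewrite /hip mxtrace_mulC tr_delta /adjmx !mxE. Qed.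


Variables (d : nat) (e : 'I_d -> M).
Hypothesis hb : unitary_basis g e.

Lemma e_sl i : \tr (e i) = 0.
Proof. by case: hb => h _; apply: h. Qed.
Lemma e_on i j : g (e i) (e j) = (i == j)%:R.
Proof. by case: hb => _ [h _]; apply: h. Qed.

Lemma expand Y : \tr Y = 0 -> Y = \sum_i g Y (e i) *: e i.
Proof.
move=> hY; case: hb => _ [_ /(_ Y hY) [a ->]].
apply: eq_bigr => k _; congr (_ *: _); rewrite g_sum.
rewrite (bigD1 k) //= e_on eqxx mulr1 big1 ?addr0 // => i /negbTE ik.
by rewrite e_on ik mulr0.
Qed.

Lemma g_lie u v X : g (lie u v) X = g v (tau (lie (adjmx u) (sig X))).
Proof. by rewrite !gE sig_sa hip_lie1 sig_sa st. Qed.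

Definition ww X i := tau (lie (adjmx (e i)) (sig X)).

Lemma stepB X i : \sum_j `|g (lie (e i) (e j)) X| ^+ 2 = g (ww X i) (ww X i).
Proof.
have trw : \tr (ww X i) = 0 by rewrite /ww Op_tr tr_lie mulr0.
rewrite {1}(expand trw) g_sum; apply: eq_bigr => j _.
by rewrite normCK g_lie g_conj mulrC.
Qed.

Definition TT X E := tau (lie (sig X) (Hm x y z (adjmx (sig X)) E)).

Lemma stepC X i : g (ww X i) (ww X i) = g (TT X (e i)) (e i).
Proof.
rewrite gE st /ww hip_lie2 hip_adj adj_lie adjmxK Op_adj // adj_lie adjmxK.
by rewrite /TT /Hm gE st.
Qed.


Lemma TT_lin X : islin (TT X).
Proof. by move=> k A B; rewrite /TT G_lin Op_lin. Qed.

Lemma TT1 X : TT X 1%:M = 0.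
Proof.
rewrite /TT /Hm lie1 (lin0 (Op_lin _ _ _)) /lie mulmx0 mul0mx subrr.
exact: (lin0 (Op_lin _ _ _)).
Qed.

Lemma trdelta (a b : 'I_N) : \tr (delta_mx a b : M) = (a == b)%:R.
Proof. by rewrite -[delta_mx a b]mul1mx tr_delta mxE eq_sym. Qed.

Lemma TT_entry X (a b : 'I_N) :
  (TT X (delta_mx a b)) a b = \sum_i ((sig (e i)) a b)^* * (TT X (e i)) a b.
Proof.
set c : C := (a == b)%:R / N%:R.
set Y : M := delta_mx a b - c *: 1%:M.
have N0 : N%:R != 0 :> C by rewrite pnatr_eq0.
have trY : \tr Y = 0.
  by rewrite /Y mxtraceB mxtraceZ mxtrace1 trdelta /c mulfVK // subrr.
have -> : (delta_mx a b : M) = c *: 1%:M + Y by rewrite /Y addrC subrK.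
rewrite (TT_lin X c) TT1 scaler0 add0r (expand trY) (lin_sum _ _ _ (TT_lin X)).
rewrite summxE; apply: eq_bigr => i _.
rewrite (linZ (TT_lin X)) mxE; congr (_ * _).
by rewrite gE sig_sa /Y hipBl hipZl hip1 Op_tr e_sl mulr0 conjC0 mulr0 subr0 hip_delta.
Qed.

Lemma stepD X : \sum_i g (TT X (e i)) (e i) = Tr (TT X).
Proof.
rewrite /Tr.
transitivity (\sum_i \sum_a \sum_b ((sig (e i)) a b)^* * (TT X (e i)) a b).
  apply: eq_bigr => i _. rewrite gE sig_sa hipE.
  by apply: eq_bigr => a _; apply: eq_bigr => b _; rewrite mulrC.
rewrite exchange_big; apply: eq_bigr => a _.
rewrite exchange_big. apply: eq_bigr => b _.
by rewrite [RHS](TT_entry X a b).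
Qed.

Lemma g0l Z : g 0 Z = 0.
Proof. by rewrite gE (lin0 (Op_lin _ _ _)) hip0l. Qed.

Lemma gNl A Z : g (- A) Z = - g A Z.
Proof. by have := g_lin (-1) A 0 Z; rewrite addr0 g0l addr0 scaleN1r mulN1r. Qed.

Lemma stepA X : 2%:R * torsion_form g e X =
  \sum_i \sum_j `|g (lie (e i) (e j)) X| ^+ 2.
Proof.
set f := fun i j => `|g (lie (e i) (e j)) X| ^+ 2.
have fsym i j : f i j = f j i.
  by rewrite /f -[lie (e j) _]opprB gNl normrN.
have fdiag i : f i i = 0.
  by rewrite /f /lie subrr g0l normr0 expr0n.
set S := \sum_(i < d) \sum_(j < d) (if (i < j)%N then f i j else 0).
have -> : torsion_form g e X = S.
  by rewrite /torsion_form /S; apply: eq_bigr => i _; rewrite big_mkcond.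
have -> : \sum_i \sum_j `|g (lie (e i) (e j)) X| ^+ 2 =
  \sum_(i < d) \sum_(j < d) ((if (i < j)%N then f i j else 0) + (if (j < i)%N then f i j else 0)).
  apply: eq_bigr => i _; apply: eq_bigr => j _; rewrite -/(f i j).
  case: ltngtP => [//|//|/val_inj ->]; by rewrite ?addr0 ?add0r // fdiag addr0.
have -> : \sum_(i < d) \sum_(j < d) ((if (i < j)%N then f i j else 0) + (if (j < i)%N then f i j else 0))
   = S + \sum_(i < d) \sum_(j < d) (if (j < i)%N then f i j else 0).
  by rewrite /S -big_split; apply: eq_bigr => i _; rewrite -big_split.
have -> : \sum_(i < d) \sum_(j < d) (if (j < i)%N then f i j else 0) = S.
  rewrite exchange_big /S; apply: eq_bigr => i _; apply: eq_bigr => j _.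
  by rewrite fsym.
by rewrite mulr_natl mulr2n.
Qed.


Lemma PE X : Pclaim x y z X = Op (n%:R * x + z ^+ 2 / x) (N%:R * (z ^+ 2 / y))
  (N%:R / n%:R * ((n.-1)%:R * x + y)) X.
Proof. by []. Qed.

Lemma part5 X : \tr X = 0 -> g (Pclaim x y z X) X = torsion_form g e X.
Proof.
move=> hX.
set W := sig X.
have trW : \tr W = 0 by rewrite Op_tr hX mulr0.
have trV : \tr (adjmx W) = 0 by rewrite tr_adj trW conjC0.
have key := Tr_T_val n0 z trW trV (lt0r_neq0 hx) (lt0r_neq0 hy).
have h2 : 2%:R * torsion_form g e X = 2%:R * g (Pclaim x y z X) X.
  rewrite stepA.
  transitivity (\sum_i g (TT X (e i)) (e i)).
    by apply: eq_bigr => i _; rewrite stepB stepC.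
  rewrite stepD /TT -/W key; congr (_ * _).
  rewrite gE sig_sa -/W /hip PE.
  have -> : Op (n%:R * x + z ^+ 2 / x) (N%:R * (z ^+ 2 / y))
    (N%:R / n%:R * ((n.-1)%:R * x + y)) X = Op (n%:R * x + z ^+ 2 / x) (N%:R * (z ^+ 2 / y))
    (N%:R / n%:R * ((n.-1)%:R * x + y)) (tau W) by rewrite /W ts.
  rewrite Op_comp //.
  by rewrite (mulrC x) (mulrC y) (mulrC z).
apply: (mulfI _ (esym h2)).
by rewrite pnatr_eq0.
Qed.

End B.

Unset Implicit Arguments.

Theorem lemma3p1 (C : numClosedFieldType) (n : nat) (hn : (2 <= n)%N)
    (x y z : C) (hx : 0 < x) (hy : 0 < y) (hz : 0 < z) :
  is_twisted_chern_ricci (@gxyz C n x y z) (@Pclaim C n x y z).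
Proof.
have n0 : (0 < n)%N by apply: leq_trans hn.
have c1p : 0 < n%:R * x + z ^+ 2 / x.
  by rewrite addr_gt0 ?mulr_gt0 ?divr_gt0 ?exprn_gt0 ?ltr0n ?invr_gt0.
have c2p : 0 < n.+1%:R * (z ^+ 2 / y).
  by rewrite mulr_gt0 ?divr_gt0 ?exprn_gt0 ?ltr0n.
have c3p : 0 < n.+1%:R / n%:R * ((n.-1)%:R * x + y).
  rewrite mulr_gt0 ?divr_gt0 ?ltr0n //.
  by apply: ltr_wpDl => //; rewrite mulr_ge0 ?ler0n // ltW.
split; [|split; [|split; [|split]]].
- by move=> X hX; rewrite /in_sl PE Op_tr hX mulr0.
- by move=> X Y _ _; rewrite !PE; have := Op_lin
    (n%:R * x + z ^+ 2 / x) (n.+1%:R * (z ^+ 2 / y)) (n.+1%:R / n%:R * ((n.-1)%:R * x + y)) 1 X Y;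
    rewrite !scale1r.
- by move=> k X _; rewrite !PE (linZ (Op_lin _ _ _)).
- move=> X Y _ _; rewrite !gE !PE Op_comp // sig_sa // Op_comp // Op_sa //;
  by apply: conj_Creal; apply: gtr0_real; apply: mulr_gt0; rewrite ?invr_gt0.
- by move=> d e hb X hX; apply: part5.
Qed.
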